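(* Let $\Gamma\le N-1$. Consider the three problems: (P$_\Gamma$) $\displaystyle\min_{\bm w\in\widehat{\mathcal V},\,\bm y\in\mathbb R^{N-1}}\bm w^\top\bar{\bm g}$ s.t. $w_i-(\bm c_{[N-1]})_i\in[-y_i\underline v_i,\,y_i\bar v_i]$ ($i\in[N-1]$), $0\le y_i\le1$, $\bm e^\top\bm y=\Gamma$; (L$_\Gamma$) $\displaystyle\max\ I_2(\bm\eta,\bm\theta)+I_1(\underline{\bm\lambda},\bar{\bm\lambda},\Gamma)$ over $(\underline{\bm\lambda},\bar{\bm\lambda},\beta,\bm\eta,\bm\theta)$ satisfying $\bar{\bm g}-\underline{\bm\lambda}+\bar{\bm\lambda}+\beta\bm e-\bm\eta+\sum_{m=1}^M\theta_mh_m\bm\Delta^m=\bm 0$, $\underline{\bm\lambda},\bar{\bm\lambda},\bm\eta,\bm\theta\ge0$, where $I_2(\bm\eta,\bm\theta):=\bm c_{[N-1]}^\top\bar{\bm g}-\bm\eta^\top\bm c_{[N-1]}+\sum_{m=1}^M\theta_mh_m\bm c_{[N-1]}^\top\bm\Delta^m$ and $I_1(\underline{\bm\lambda},\bar{\bm\lambda},\Gamma):=\min\{\sum_{i=1}^{N-1}y_i(-(\underline\lambda_i\underline v_i+\bar\lambda_i\bar v_i)):0\le y_i\le1,\ \bm e^\top\bm y=\Gamma\}$; (D$_\Gamma$) $\displaystyle\max\ \bm c_{[N-1]}^\top\bar{\bm g}-\bm\eta^\top\bm c_{[N-1]}-\sum_{i=1}^{N-1}\tau_i-\tau_0\Gamma+\sum_{m=1}^M\theta_mh_m\bm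 c_{[N-1]}^\top\bm\Delta^m$ over $\underline{\bm\lambda},\bar{\bm\lambda},\bm\eta,\bm\tau\in\mathbb R^{N-1}$, $\beta,\tau_0\in\mathbb R$, $\bm\theta\in\mathbb R^M$ subject to $\bar{\bm g}-\underline{\bm\lambda}+\bar{\bm\lambda}+\beta\bm e-\bm\eta+\sum_{m=1}^M\theta_mh_m\bm\Delta^m=\bm 0$, $-\underline\lambda_i\underline v_i-\bar\lambda_i\bar v_i+\tau_i+\tau_0\ge0$ ($i\in[N-1]$), $\underline{\bm\lambda},\bar{\bm\lambda},\bm\eta,\bm\theta,\bm\tau\ge0$. Then (P$_\Gamma$) and (L$_\Gamma$) can both be reformulated as (D$_\Gamma$): their optimal values coincide with the optimal value of (D$_\Gamma$).
   Context: Let $N\ge3$ be an integer and $\underline x=x_1<x_2<\cdots<x_N=\bar x$ real numbers; $\bm e$ denotes the all-ones vector of the appropriate dimension. Define $\bm g:[\underline x,\bar x]\to\mathbb R^{N-1}$ by $\bm g(x_1)=\bm 0$ and, for $x\in(x_i,x_{i+1}]$ ($i\in\{1,\dots,N-1\}$), $\bm g(x)=(1,\dots,1,\frac{x-x_i}{x_{i+1}-x_i},0,\dots,0)$ with the first $i-1$ entries equal to $1$, the $i$-th entry $\frac{x-x_i}{x_{i+1}-x_i}$ and the last $N-1-i$ entries $0$. For $\bm v\in\mathbb R^{N-2}$ let $\bm R\bm v:=(v_1,\dots,v_{N-2},1-\bm e^\top\bm v)\in\mathbb R^{N-1}$. Let $\bm z\in\mathbb R^n$ and $\bm\xi^1,\dots,\bm\xi^K\in\mathbb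 R^n$ with $\bm z^\top\bm\xi^k\in[\underline x,\bar x]$ (the distribution of $\bm\xi$ puts mass $1/K$ on each $\bm\xi^k$), and $\bar{\bm g}:=\frac1K\sum_{k=1}^K\bm g(\bm z^\top\bm\xi^k)$. Let $M\ge1$ and, for $m=1,\dots,M$, let $r_1^m\le r_3^m$ and $r_2^m$ lie in $[\underline x,\bar x]$, $p^m\in[0,1]$, $h_m\in\{-1,1\}$, and $\bm\Delta^m:=(1-p^m)\bm g(r_1^m)+p^m\bm g(r_3^m)-\bm g(r_2^m)$. Let $\mathcal V:=\{\bm v\in\mathbb R^{N-2}:\bm v\ge0,\ \bm e^\top\bm v\le1,\ h_m(\bm R\bm v)^\top\bm\Delta^m\le0,\ m\in[M]\}$, assumed to have nonempty interior, let $\bm c\in\mathbb R^{N-2}$ be its analytic center (maximizer over the interior of the sum of the logarithms of the slacks of the defining inequalities) and $\bm c_{[N-1]}:=\bm R\bm c$ (so $\bm e^\top\bm c_{[N-1]}=1$). For $i\in[N-1]$ let $\underline v_i:=-\min\{(\bm R\bm v)_i-(\bm c_{[N-1]})_i:\bm v\in\mathcal V\}$ and $\bar v_i:=\max\{(\bm R\bm v)_i-(\bm c_{[N-1]})_i:\bm v\in\mathcal V\}$. Let $\widehat{\mathcal V}:=\{\bm w\in\mathbb R^{N-1}_+:\bm e^\top\bm w=1,\ h_m\bm w^\top\bm\Delta^m\le0,\ m\in[M]\}$. Optimal values are understood in the extended reals. *)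

(* Defs.v *)
From HB Require Import structures.
From mathcomp Require Import all_boot all_order all_algebra.
From mathcomp Require Import all_classical all_reals all_analysis.
Set Implicit Arguments.
Unset Strict Implicit.
Unset Printing Implicit Defensive.
Import Order.TTheory GRing.Theory Num.Theory.
Local Open Scope ring_scope.
Local Open Scope classical_set_scope.

Section Defs.
Variable R : realType.

Definition dot (k : nat) (u v : 'I_k -> R) : R := \sum_(i < k) u i * v i.

(* Breakpoints are
   0-indexed: xs 0 < xs 1 < ... < xs N.-1.  Entry j (0-indexed) of g x is
   1 if x >= xs (j+1), 0 if x <= xs j, and (x - xs j)/(xs (j+1) - xs j) otherwise;
   this is exactly the paper's g on (x_i, x_{i+1}] and g(x_1) = 0. *)
Definition gfun (N : nat) (xs : nat -> R) (x : R) : 'I_N.-1 -> R :=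
  fun j => if x <= xs j then 0
           else if xs j.+1 <= x then 1
           else (x - xs j) / (xs j.+1 - xs j).

(* R v := (v_1, ..., v_{N-2}, 1 - e^T v) *)
Definition Rmap (N : nat) (v : 'I_N.-2 -> R) : 'I_N.-1 -> R :=
  fun j => oapp v (1 - \sum_(k < N.-2) v k) (insub (nat_of_ord j) : option 'I_N.-2).

Definition Delta (N : nat) (xs : nat -> R) (p r1 r2 r3 : R) : 'I_N.-1 -> R :=
  fun j => (1 - p) * @gfun N xs r1 j + p * @gfun N xs r3 j - @gfun N xs r2 j.

Definition Vset (N M : nat) (h : 'I_M -> R) (Dl : 'I_M -> 'I_N.-1 -> R)
  : set ('I_N.-2 -> R) :=
  [set v | (forall i, 0 <= v i) /\ \sum_(i < N.-2) v i <= 1 /\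
           (forall m, h m * dot (Rmap v) (Dl m) <= 0)].

Definition Vhat (N M : nat) (h : 'I_M -> R) (Dl : 'I_M -> 'I_N.-1 -> R)
  : set ('I_N.-1 -> R) :=
  [set w | (forall i, 0 <= w i) /\ \sum_(i < N.-1) w i = 1 /\
           (forall m, h m * dot w (Dl m) <= 0)].

(* v is an interior point of S (interior in R^k w.r.t. the sup norm,
   equivalently any norm) *)
Definition interior_pt (k : nat) (S : set ('I_k -> R)) (v : 'I_k -> R) : Prop :=
  exists2 e : R, 0 < e & forall u, (forall i, `|u i - v i| < e) -> S u.

Definition logbarrier (N M : nat) (h : 'I_M -> R) (Dl : 'I_M -> 'I_N.-1 -> R)
  (v : 'I_N.-2 -> R) : R :=
  \sum_(i < N.-2) ln (v i) + ln (1 - \sum_(i < N.-2) v i)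
  + \sum_(m < M) ln (- (h m * dot (Rmap v) (Dl m))).

Definition analytic_center (N M : nat) (h : 'I_M -> R) (Dl : 'I_M -> 'I_N.-1 -> R)
  (c : 'I_N.-2 -> R) : Prop :=
  interior_pt (Vset h Dl) c /\
  forall v, interior_pt (Vset h Dl) v -> logbarrier h Dl v <= logbarrier h Dl c.

Definition vlow (N M : nat) (h : 'I_M -> R) (Dl : 'I_M -> 'I_N.-1 -> R)
  (cR : 'I_N.-1 -> R) (i : 'I_N.-1) : R :=
  - inf [set Rmap v i - cR i | v in Vset h Dl].

Definition vup (N M : nat) (h : 'I_M -> R) (Dl : 'I_M -> 'I_N.-1 -> R)
  (cR : 'I_N.-1 -> R) (i : 'I_N.-1) : R :=
  sup [set Rmap v i - cR i | v in Vset h Dl].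

Definition budget (k : nat) (Gamma : R) (y : 'I_k -> R) : Prop :=
  (forall i, 0 <= y i <= 1) /\ \sum_(i < k) y i = Gamma.

Definition val_P (N M : nat) (h : 'I_M -> R) (Dl : 'I_M -> 'I_N.-1 -> R)
  (gbar cR vl vu : 'I_N.-1 -> R) (Gamma : R) : \bar R :=
  ereal_inf [set r | exists (w y : 'I_N.-1 -> R),
    [/\ Vhat h Dl w,
        (forall i, - (y i * vl i) <= w i - cR i <= y i * vu i),
        budget Gamma y &
        r = (dot w gbar)%:E]].

Definition I1 (k : nat) (lamL lamU vl vu : 'I_k -> R) (Gamma : R) : \bar R :=
  ereal_inf [set (\sum_(i < k) y i * (- (lamL i * vl i + lamU i * vu i)))%:E
            | y in budget Gamma].

Definition I2 (N M : nat) (h : 'I_M -> R) (Dl : 'I_M -> 'I_N.-1 -> R)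
  (gbar cR : 'I_N.-1 -> R) (eta : 'I_N.-1 -> R) (theta : 'I_M -> R) : R :=
  dot cR gbar - dot eta cR + \sum_(m < M) theta m * h m * dot cR (Dl m).

Definition eq_constr (N M : nat) (h : 'I_M -> R) (Dl : 'I_M -> 'I_N.-1 -> R)
  (gbar lamL lamU : 'I_N.-1 -> R) (beta : R) (eta : 'I_N.-1 -> R)
  (theta : 'I_M -> R) : Prop :=
  forall i, gbar i - lamL i + lamU i + beta - eta i
            + \sum_(m < M) theta m * h m * Dl m i = 0.

Definition val_L (N M : nat) (h : 'I_M -> R) (Dl : 'I_M -> 'I_N.-1 -> R)
  (gbar cR vl vu : 'I_N.-1 -> R) (Gamma : R) : \bar R :=
  ereal_sup [set r | exists (lamL lamU : 'I_N.-1 -> R) (beta : R)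
                            (eta : 'I_N.-1 -> R) (theta : 'I_M -> R),
    [/\ eq_constr h Dl gbar lamL lamU beta eta theta,
        (forall i, 0 <= lamL i) /\ (forall i, 0 <= lamU i),
        (forall i, 0 <= eta i) /\ (forall m, 0 <= theta m) &
        r = ((I2 h Dl gbar cR eta theta)%:E + I1 lamL lamU vl vu Gamma)%E]].

Definition val_D (N M : nat) (h : 'I_M -> R) (Dl : 'I_M -> 'I_N.-1 -> R)
  (gbar cR vl vu : 'I_N.-1 -> R) (Gamma : R) : \bar R :=
  ereal_sup [set r | exists (lamL lamU eta tau : 'I_N.-1 -> R) (beta tau0 : R)
                            (theta : 'I_M -> R),
    [/\ eq_constr h Dl gbar lamL lamU beta eta theta,
        (forall i, - (lamL i * vl i) - lamU i * vu i + tau i + tau0 >= 0),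
        (forall i, 0 <= lamL i) /\ (forall i, 0 <= lamU i),
        (forall i, 0 <= eta i) /\ (forall m, 0 <= theta m) /\ (forall i, 0 <= tau i) &
        r = (dot cR gbar - dot eta cR - \sum_(i < N.-1) tau i - tau0 * Gamma
             + \sum_(m < M) theta m * h m * dot cR (Dl m))%:E]].

End Defs.

(* Main.v *)
From HB Require Import structures.
From mathcomp Require Import all_boot all_order all_algebra.
From mathcomp Require Import all_classical all_reals all_analysis.
From mathcomp Require Import ring lra.
Require Import Defs.
Set Implicit Arguments.
Unset Strict Implicit.
Unset Printing Implicit Defensive.
Import Order.TTheory GRing.Theory Num.Theory.
Local Open Scope ring_scope.

Section LP.
Variable R : realType.

Lemma sum_delta (J : finType) (j0 : J) (F : J -> R) :
  \sum_j (if j == j0 then 1 else 0) * F j = F j0.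
Proof.
rewrite (bigD1 j0) //= eqxx mul1r big1 ?addr0 // => j /negPf ->; by rewrite mul0r.
Qed.

Section FM.
Variable J : finType.
Variable a : J -> R.
Definition uc j : R := if a j == 0 then 1 else 0.
Definition sc p q : R := if (0 < a p) && (a q < 0) then - a q else 0.
Definition tc p q : R := if (0 < a p) && (a q < 0) then a p else 0.
Definition Fnew (F : J -> R) (j' : J + J * J) : R :=
  match j' with inl j => uc j * F j
  | inr pq => sc pq.1 pq.2 * F pq.1 + tc pq.1 pq.2 * F pq.2 end.
Definition mu_back (mu' : J + J * J -> R) j :=
  mu' (inl j) * uc j + \sum_q mu' (inr (j, q)) * sc j q
  + \sum_p mu' (inr (p, j)) * tc p j.

Lemma uc_ge0 j : 0 <= uc j. Proof. by rewrite /uc; case: ifP. Qed.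
Lemma sc_ge0 p q : 0 <= sc p q.
Proof. rewrite /sc; case: ifP => // /andP[_ h]; by rewrite oppr_ge0 ltW. Qed.
Lemma tc_ge0 p q : 0 <= tc p q.
Proof. rewrite /tc; case: ifP => // /andP[h _]; by rewrite ltW. Qed.

Lemma mu_back_ge0 mu' : (forall j, 0 <= mu' j) -> forall j, 0 <= mu_back mu' j.
Proof.
move=> H j; rewrite /mu_back; apply: addr_ge0; first apply: addr_ge0.
- by apply: mulr_ge0 => //; apply: uc_ge0.
- by apply: sumr_ge0 => q _; apply: mulr_ge0 => //; apply: sc_ge0.
- by apply: sumr_ge0 => q _; apply: mulr_ge0 => //; apply: tc_ge0.
Qed.

Lemma mu_back_sum mu' F :
  \sum_j mu_back mu' j * F j = \sum_j' mu' j' * Fnew F j'.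
Proof.
rewrite big_sumType /=.
have -> : \sum_(pq : J * J) mu' (inr pq) * Fnew F (inr pq) =
  \sum_p \sum_q (mu' (inr (p, q)) * (sc p q * F p) + mu' (inr (p, q)) * (tc p q * F q)).
  by rewrite pair_bigA; apply: eq_bigr => -[p q] _ /=; rewrite mulrDr.
under [X in _ = _ + X]eq_bigr do rewrite big_split /=.
rewrite big_split /= [X in _ = _ + (_ + X)]exchange_big /=.
rewrite /mu_back.
under eq_bigr do rewrite !mulrDl.
rewrite !big_split /=.
rewrite -addrA; congr (_ + (_ + _)).
- by apply: eq_bigr => j _; rewrite mulrA.
- by apply: eq_bigr => j _; rewrite mulr_suml; apply: eq_bigr => q _; rewrite !mulrA.
- by apply: eq_bigr => j _; rewrite mulr_suml; apply: eq_bigr => q _; rewrite !mulrA.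
Qed.

Lemma Fnew_a j' : Fnew a j' = 0.
Proof.
case: j' => [j|[p q]] /=.
  by rewrite /uc; case: eqP => [->|]; rewrite ?mulr0 ?mul0r.
rewrite /sc /tc; case: ifP => _; last by rewrite !mul0r addr0.
ring.
Qed.
End FM.

Lemma farkas n : forall (J : finType) (A : J -> 'I_n -> R) (b : J -> R),
  (exists x : 'I_n -> R, forall j, \sum_i A j i * x i <= b j) \/
  (exists mu : J -> R, (forall j, 0 <= mu j) /\
     (forall i, \sum_j mu j * A j i = 0) /\ \sum_j mu j * b j < 0).
Proof.
elim: n => [|n IH] J A b.
  case: (pselect (exists j, b j < 0)) => [[j0 Hj0]|nb].
    right; exists (fun j => if j == j0 then 1 else 0); split.
      by move=> j; case: ifP.
    split; first by case.
    by rewrite sum_delta.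
  left; exists (fun _ => 0) => j; rewrite big_ord0.
  by rewrite leNgt; apply/negP => h; apply: nb; exists j.
pose a j := A j ord0.
pose A' j (i : 'I_n) := A j (lift ord0 i).
have [[x' Hx']|[mu' [Hmu0 [HmuA Hmub]]]] :=
  IH (J + J * J)%type (fun j' i => Fnew a (fun j => A' j i) j') (Fnew a b).
  pose r j := \sum_i A' j i * x' i.
  have HF j' : \sum_i Fnew a (fun j => A' j i) j' * x' i = Fnew a r j'.
    case: j' => [j|[p q]] /=; rewrite /r ?mulr_sumr -?big_split /=;
      by apply: eq_bigr => i _; ring.
  have Hz j : a j = 0 -> r j <= b j.
    move=> h0; have := Hx' (inl j); rewrite HF /= /uc h0 eqxx !mul1r //.
  have Hpq p q : 0 < a p -> a q < 0 -> - a q * r p + a p * r q <= - a q * b p + a p * b q.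
    move=> hp hq; have := Hx' (inr (p, q)); rewrite HF /= /sc /tc hp hq //.
  suff [x0 Hx0] : exists x0, forall j, a j * x0 + r j <= b j.
    left; exists (fun i => if unlift ord0 i is Some k then x' k else x0) => j.
    rewrite big_ord_recl /= unlift_none.
    under eq_bigr do rewrite liftK.
    exact: Hx0.
  case: (pselect (exists p, 0 < a p)) => [[p0 Hp0]|noP].
    pose ub p := (b p - r p) / a p.
    case: (arg_minP (P := fun p => 0 < a p) ub Hp0) => p Hp Hmin.
    exists (ub p) => j.
    case: (ltrgt0P (a j)) => Haj.
    - have := Hmin j Haj; rewrite /ub => hle.
      have e : a j * ((b j - r j) / a j) = b j - r j.
        by rewrite mulrC -mulrA mulVf ?mulr1 // gt_eqF.
      have : a j * ((b p - r p) / a p) <= a j * ((b j - r j) / a j).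
        by rewrite ler_pM2l.
      rewrite e; lra.
    - have := Hpq p j Hp Haj.
      move=> H; rewrite /ub -(ler_pM2l Hp).
      have -> : a p * (a j * ((b p - r p) / a p) + r j) =
                a j * (b p - r p) + a p * r j.
        by field; rewrite gt_eqF.
      nra.
    - by rewrite Haj mul0r add0r; apply: Hz.
  pose lb q := (b q - r q) / a q.
  exists (\sum_q `|lb q|) => j.
  case: (ltrgt0P (a j)) => Haj.
  - by exfalso; apply: noP; exists j.
  - have h1 : lb j <= \sum_q `|lb q|.
      apply: le_trans (ler_norm _) _.
      rewrite (bigD1 j) //= lerDl; by apply: sumr_ge0.
    have : a j * \sum_q `|lb q| <= a j * lb j by apply: ler_wnM2l => //; apply: ltW.
    have -> : a j * lb j = b j - r j.
      by rewrite /lb mulrC -mulrA mulVf ?mulr1 // lt_eqF.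
    lra.
  - by rewrite Haj mul0r add0r; apply: Hz.
right; exists (mu_back a mu'); split; first exact: mu_back_ge0.
split.
  move=> i; case: (unliftP ord0 i) => [i'|] ->.
    by rewrite (mu_back_sum a mu' (fun j => A j (lift ord0 i'))); apply: HmuA.
  rewrite (mu_back_sum a mu' (fun j => A j ord0)) big1 // => j' _.
  by rewrite (Fnew_a a) mulr0.
by rewrite mu_back_sum.
Qed.


Definition affine (V : finType) (f : (V -> R) -> R) :=
  exists (a : V -> R) (b0 : R), forall x, f x = \sum_v a v * x v + b0.

Lemma affine_cst (V : finType) (k : R) : affine (fun _ : V -> R => k).
Proof. exists (fun _ => 0), k => x; by rewrite big1 ?add0r // => v _; rewrite mul0r. Qed.

Lemma affine_coord (V : finType) (v0 : V) : affine (fun x : V -> R => x v0).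
Proof. exists (fun v => if v == v0 then 1 else 0), 0 => x; by rewrite sum_delta addr0. Qed.

Lemma affine_add (V : finType) (f g : (V -> R) -> R) :
  affine f -> affine g -> affine (fun x => f x + g x).
Proof.
move=> [a1 [b1 H1]] [a2 [b2 H2]]; exists (fun v => a1 v + a2 v), (b1 + b2) => x.
rewrite H1 H2 [in RHS](eq_bigr (fun v => a1 v * x v + a2 v * x v)); last by move=> v _; rewrite mulrDl.
rewrite big_split /=; ring.
Qed.

Lemma affine_opp (V : finType) (f : (V -> R) -> R) :
  affine f -> affine (fun x => - f x).
Proof.
move=> [a1 [b1 H1]]; exists (fun v => - a1 v), (- b1) => x.
rewrite H1 [in RHS](eq_bigr (fun v => - (a1 v * x v))); last by move=> v _; rewrite mulNr.
rewrite sumrN; ring.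
Qed.

Lemma affine_scale (V : finType) (k : R) (f : (V -> R) -> R) :
  affine f -> affine (fun x => k * f x).
Proof.
move=> [a1 [b1 H1]]; exists (fun v => k * a1 v), (k * b1) => x.
rewrite H1 mulrDr mulr_sumr; congr (_ + _); apply: eq_bigr => v _; ring.
Qed.

Lemma affine_scaler (V : finType) (k : R) (f : (V -> R) -> R) :
  affine f -> affine (fun x => f x * k).
Proof.
move=> H; have := affine_scale k H; case=> a1 [b1 H1]; exists a1, b1 => x.
by rewrite -H1 mulrC.
Qed.

Lemma affine_sum (V I : finType) (F : I -> (V -> R) -> R) :
  (forall i, affine (F i)) -> affine (fun x => \sum_i F i x).
Proof.
move=> H; have [aa Ha] := choice H; have [bb Hb] := choice Ha.
exists (fun v => \sum_i aa i v), (\sum_i bb i) => x.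
under eq_bigr do rewrite Hb; rewrite big_split /=; congr (_ + _).
rewrite [in RHS](eq_bigr (fun v => \sum_i aa i v * x v)); last by move=> v _; rewrite mulr_suml.
by rewrite exchange_big.
Qed.



Lemma alt_affine (V J : finType) (f : J -> (V -> R) -> R) :
  (forall j, affine (f j)) ->
  (exists x, forall j, f j x <= 0) \/
  (exists mu : J -> R, (forall j, 0 <= mu j) /\ forall x, \sum_j mu j * f j x = 1).
Proof.
move=> Haff; have [ab Hab] := choice Haff; have [bb Hbb] := choice Hab.
have [[x' Hx']|[mu [H0 [HA Hb]]]] :=
  farkas (fun j (i : 'I_#|V|) => ab j (enum_val i)) (fun j => - bb j).
  left; exists (fun v => x' (enum_rank v)) => j; rewrite Hbb.
  have := Hx' j.
  have -> : \sum_v ab j v * x' (enum_rank v) = \sum_(i < #|V|) ab j (enum_val i) * x' i.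
    rewrite (reindex _ (onW_bij _ (enum_val_bij V))) /=.
    apply: eq_bigr => i _; congr (_ * x' _); exact: enum_valK.
  lra.
pose s := \sum_j mu j * bb j.
have hs : 0 < s.
  move: Hb; rewrite /s; under eq_bigr do rewrite mulrN; rewrite sumrN; lra.
right; exists (fun j => mu j / s); split.
  by move=> j; apply: divr_ge0 => //; apply: ltW.
move=> x.
have HA' v : \sum_j mu j * ab j v = 0.
  by have := HA (enum_rank v); rewrite enum_rankK.
have -> : \sum_j mu j / s * f j x = (\sum_j mu j * f j x) / s.
  by rewrite mulr_suml; apply: eq_bigr => j _; rewrite mulrAC.
have -> : \sum_j mu j * f j x = s.
  under eq_bigr do rewrite Hbb mulrDr mulr_sumr.
  rewrite big_split /= exchange_big /= big1 ?add0r //.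
  move=> v _; transitivity (x v * \sum_j mu j * ab j v); last by rewrite HA' mulr0.
  rewrite mulr_sumr; by apply: eq_bigr => j _; ring.
by rewrite divff // gt_eqF.
Qed.

Lemma lp_strong (V J : finType) (f : J -> (V -> R) -> R) (g : (V -> R) -> R) (t : R) :
  (forall j, affine (f j)) -> affine g ->
  (exists x0, forall j, f j x0 <= 0) ->
  (forall x, (forall j, f j x <= 0) -> t < g x) ->
  exists mu : J -> R, (forall j, 0 <= mu j) /\
    exists s, t < s /\ forall x, g x + \sum_j mu j * f j x = s.
Proof.
move=> Hf Hg [x0 Hx0] Ht.
pose f' (j' : 'I_1 + J) := match j' with inl _ => fun x => g x - t | inr j => f j end.
have Hf' j' : affine (f' j').
  by case: j' => [_|j] /=; [apply: affine_add => //; apply: affine_cst | apply: Hf].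
have [[x Hx]|[mu [H0 Hmu]]] := alt_affine Hf'.
  have := Hx (inl ord0); have := Ht x (fun j => Hx (inr j)) => /=; lra.
have Hmu' x : mu (inl ord0) * (g x - t) + \sum_j mu (inr j) * f j x = 1.
  by rewrite -(Hmu x) big_sumType big_ord1.
pose m0 := mu (inl ord0).
have hm0 : 0 < m0.
  rewrite lt_def H0 andbT; apply/eqP => h.
  have := Hmu' x0; rewrite -/m0 h mul0r add0r => e.
  have : \sum_j mu (inr j) * f j x0 <= 0.
    by apply: sumr_le0 => j _; apply: mulr_ge0_le0.
  lra.
exists (fun j => mu (inr j) / m0); split.
  by move=> j; apply: divr_ge0 => //; apply: ltW.
exists (t + 1 / m0); split; first by rewrite ltrDl divr_gt0.
move=> x; have := Hmu' x; rewrite -/m0 => e.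
have -> : \sum_j mu (inr j) / m0 * f j x = (\sum_j mu (inr j) * f j x) / m0.
  by rewrite mulr_suml; apply: eq_bigr => j _; rewrite mulrAC.
have -> : \sum_j mu (inr j) * f j x = 1 - m0 * (g x - t) by lra.
by field; rewrite gt_eqF.
Qed.

Lemma coef0 (I : finType) (E : I -> R) (C s : R) :
  (forall u : I -> R, \sum_i u i * E i + C = s) -> (forall i, E i = 0) /\ C = s.
Proof.
move=> H; have H0 := H (fun _ => 0).
rewrite big1 ?add0r in H0; last by move=> i _; rewrite mul0r.
split => // i; have := H (fun j => if j == i then 1 else 0).
by rewrite sum_delta; lra.
Qed.

End LP.

Ltac affine_tac := repeat first
  [ apply: affine_cst | apply: affine_coord | apply: affine_sum => ? |
    apply: affine_add | apply: affine_opp | apply: affine_scale | apply: affine_scaler ].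


Section Prob.
Variable R : realType.
Variables (N M : nat) (h : 'I_M -> R) (Dl : 'I_M -> 'I_N.-1 -> R).
Variables (gbar cR vl vu : 'I_N.-1 -> R) (Gamma : R).
Hypothesis HcR : \sum_i cR i = 1.

Definition Dval (eta tau : 'I_N.-1 -> R) (tau0 : R) (theta : 'I_M -> R) : R :=
  dot cR gbar - dot eta cR - \sum_(i < N.-1) tau i - tau0 * Gamma
  + \sum_(m < M) theta m * h m * dot cR (Dl m).

Definition Dpt (lamL lamU eta tau : 'I_N.-1 -> R) (beta tau0 : R) (theta : 'I_M -> R) :=
  [/\ eq_constr h Dl gbar lamL lamU beta eta theta,
      (forall i, - (lamL i * vl i) - lamU i * vu i + tau i + tau0 >= 0),
      (forall i, 0 <= lamL i) /\ (forall i, 0 <= lamU i) &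
      (forall i, 0 <= eta i) /\ (forall m, 0 <= theta m) /\ (forall i, 0 <= tau i)].

Lemma le_valD lamL lamU eta tau beta tau0 theta :
  Dpt lamL lamU eta tau beta tau0 theta ->
  ((Dval eta tau tau0 theta)%:E <= val_D h Dl gbar cR vl vu Gamma)%E.
Proof.
move=> [H1 H2 H3 H4]; apply: ereal_sup_ubound.
by exists lamL, lamU, eta, tau, beta, tau0, theta.
Qed.

Lemma lagP (w y eta lamL lamU tau rho : 'I_N.-1 -> R) (beta tau0 : R) (theta : 'I_M -> R) :
  dot w gbar + (\sum_i eta i * - w i + \sum_i lamL i * (- (w i - cR i) - y i * vl i)
   + \sum_i lamU i * ((w i - cR i) - y i * vu i) + \sum_i tau i * (y i - 1)
   + \sum_i rho i * - y i + beta * (\sum_i w i - 1) + tau0 * (\sum_i y i - Gamma)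
   + \sum_m theta m * (h m * dot w (Dl m)))
  = \sum_i (w i - cR i) * (gbar i - lamL i + lamU i + beta - eta i
                             + \sum_m theta m * h m * Dl m i)
    + \sum_i y i * (- (lamL i * vl i) - lamU i * vu i + tau i + tau0 - rho i)
    + Dval eta tau tau0 theta.
Proof.
have e1 : \sum_m theta m * (h m * dot w (Dl m)) =
          \sum_i w i * \sum_m theta m * h m * Dl m i.
  rewrite /dot; under eq_bigr do rewrite mulr_sumr mulr_sumr.
  rewrite exchange_big; apply: eq_bigr => i _; rewrite mulr_sumr.
  by apply: eq_bigr => m _; ring.
have e2 : \sum_m theta m * h m * dot cR (Dl m) =
          \sum_i cR i * \sum_m theta m * h m * Dl m i.
  rewrite /dot; under eq_bigr do rewrite mulr_sumr.
  rewrite exchange_big; apply: eq_bigr => i _; rewrite mulr_sumr.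
  by apply: eq_bigr => m _; ring.
have e3 : beta * (\sum_i w i - 1) = \sum_i beta * (w i - cR i).
  by rewrite -mulr_sumr sumrB HcR.
have e4 : tau0 * (\sum_i y i - Gamma) = \sum_i tau0 * y i - tau0 * Gamma.
  by rewrite mulrBr mulr_sumr.
rewrite /Dval e1 e2 e3 e4 /dot.
have key : \sum_i (w i * gbar i + eta i * - w i + lamL i * (- (w i - cR i) - y i * vl i)
   + lamU i * ((w i - cR i) - y i * vu i) + tau i * (y i - 1) + rho i * - y i
   + beta * (w i - cR i) + tau0 * y i + w i * \sum_m theta m * h m * Dl m i)
  = \sum_i ((w i - cR i) * (gbar i - lamL i + lamU i + beta - eta i
                             + \sum_m theta m * h m * Dl m i)
    + y i * (- (lamL i * vl i) - lamU i * vu i + tau i + tau0 - rho i)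
    + cR i * gbar i - (eta i * cR i) - tau i + cR i * \sum_m theta m * h m * Dl m i).
  by apply: eq_bigr => i _; ring.
rewrite !big_split /= !sumrN in key.
lra.
Qed.


Definition JP := ((((('I_N.-1 + 'I_N.-1) + 'I_N.-1) + 'I_N.-1) + 'I_N.-1)
                  + ((bool + bool) + 'I_M))%type.

Definition fP (j : JP) (x : 'I_N.-1 + 'I_N.-1 -> R) : R :=
  match j with
  | inl (inl (inl (inl (inl i)))) => - x (inl i)
  | inl (inl (inl (inl (inr i)))) => - (x (inl i) - cR i) - x (inr i) * vl i
  | inl (inl (inl (inr i))) => (x (inl i) - cR i) - x (inr i) * vu i
  | inl (inl (inr i)) => x (inr i) - 1
  | inl (inr i) => - x (inr i)
  | inr (inl (inl true)) => \sum_i x (inl i) - 1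
  | inr (inl (inl false)) => 1 - \sum_i x (inl i)
  | inr (inl (inr true)) => \sum_i x (inr i) - Gamma
  | inr (inl (inr false)) => Gamma - \sum_i x (inr i)
  | inr (inr m) => h m * dot (fun i => x (inl i)) (Dl m)
  end.

Lemma fP_aff j : affine (fP j).
Proof.
case: j => [[[[[i|i]|i]|i]|i]|[[[]|[]]|m]] /=; rewrite ?/dot; affine_tac.
Qed.

Definition Pfeas (w y : 'I_N.-1 -> R) :=
  [/\ Vhat h Dl w, (forall i, - (y i * vl i) <= w i - cR i <= y i * vu i) &
      budget Gamma y].

Lemma fP_feas x :
  (forall j, fP j x <= 0) <-> Pfeas (fun i => x (inl i)) (fun i => x (inr i)).
Proof.
split.
  move=> H; split; [split; [|split]| |split].
  - by move=> i; have := H (inl (inl (inl (inl (inl i))))) => /=; lra.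
  - by have := H (inr (inl (inl true))); have := H (inr (inl (inl false))) => /=; lra.
  - by move=> m; have := H (inr (inr m)).
  - move=> i; have := H (inl (inl (inl (inl (inr i))))); have := H (inl (inl (inl (inr i)))).
    by move=> /= h1 h2; apply/andP; split; lra.
  - move=> i; have := H (inl (inl (inr i))); have := H (inl (inr i)).
    by move=> /= h1 h2; apply/andP; split; lra.
  - by have := H (inr (inl (inr true))); have := H (inr (inl (inr false))) => /=; lra.
move=> [[Hw [Hs Hm]] Hb [Hy Hsy]] j.
case: j => [[[[[i|i]|i]|i]|i]|[[[]|[]]|m]] /=.
- by have := Hw i; lra.
- by have /andP[] := Hb i; lra.
- by have /andP[] := Hb i; lra.
- by have /andP[] := Hy i; lra.
- by have /andP[] := Hy i; lra.
- by rewrite Hs subrr.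
- by rewrite Hs subrr.
- by rewrite Hsy subrr.
- by rewrite Hsy subrr.
- exact: Hm.
Qed.

Lemma sum_fP (mu : JP -> R) x :
  \sum_j mu j * fP j x =
   \sum_i mu (inl (inl (inl (inl (inl i))))) * - x (inl i)
   + \sum_i mu (inl (inl (inl (inl (inr i))))) * (- (x (inl i) - cR i) - x (inr i) * vl i)
   + \sum_i mu (inl (inl (inl (inr i)))) * ((x (inl i) - cR i) - x (inr i) * vu i)
   + \sum_i mu (inl (inl (inr i))) * (x (inr i) - 1)
   + \sum_i mu (inl (inr i)) * - x (inr i)
   + (mu (inr (inl (inl true))) - mu (inr (inl (inl false)))) * (\sum_i x (inl i) - 1)
   + (mu (inr (inl (inr true))) - mu (inr (inl (inr false)))) * (\sum_i x (inr i) - Gamma)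
   + \sum_m mu (inr (inr m)) * (h m * dot (fun i => x (inl i)) (Dl m)).
Proof. rewrite !big_sumType !big_bool /=; ring. Qed.

Lemma P_weak w y lamL lamU eta tau beta tau0 theta :
  Pfeas w y -> Dpt lamL lamU eta tau beta tau0 theta ->
  Dval eta tau tau0 theta <= dot w gbar.
Proof.
move=> [[Hw [Hs Hm]] Hb [Hy Hsy]] [HE HF [HL HU] [Heta [Hth Htau]]].
pose rho i := - (lamL i * vl i) - lamU i * vu i + tau i + tau0.
have := lagP w y eta lamL lamU tau rho beta tau0 theta.
rewrite [X in _ = X + _ + _]big1; last by move=> i _; rewrite (HE i) mulr0.
rewrite [X in _ = _ + X + _]big1; last by move=> i _; rewrite /rho subrr mulr0.
rewrite Hs Hsy !subrr !mulr0 !addr0 add0r => <-.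
have a1 : \sum_i eta i * - w i <= 0.
  by apply: sumr_le0 => i _; apply: mulr_ge0_le0 => //; rewrite oppr_le0.
have a2 : \sum_i lamL i * (- (w i - cR i) - y i * vl i) <= 0.
  apply: sumr_le0 => i _; apply: mulr_ge0_le0 => //.
  by have /andP[] := Hb i; lra.
have a3 : \sum_i lamU i * ((w i - cR i) - y i * vu i) <= 0.
  apply: sumr_le0 => i _; apply: mulr_ge0_le0 => //.
  by have /andP[] := Hb i; lra.
have a4 : \sum_i tau i * (y i - 1) <= 0.
  apply: sumr_le0 => i _; apply: mulr_ge0_le0 => //.
  by have /andP[] := Hy i; lra.
have a5 : \sum_i rho i * - y i <= 0.
  apply: sumr_le0 => i _; apply: mulr_ge0_le0; first exact: HF.
  by have /andP[] := Hy i; lra.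
have a6 : \sum_m theta m * (h m * dot w (Dl m)) <= 0.
  by apply: sumr_le0 => m _; apply: mulr_ge0_le0.
lra.
Qed.

Lemma P_strong t :
  (exists w y, Pfeas w y) ->
  (forall w y, Pfeas w y -> t < dot w gbar) ->
  exists lamL lamU eta tau beta tau0 theta,
    Dpt lamL lamU eta tau beta tau0 theta /\ t < Dval eta tau tau0 theta.
Proof.
move=> [w0 [y0 H0]] Ht.
have := @lp_strong R _ _ fP (fun x => dot (fun i => x (inl i)) gbar) t fP_aff.
case.
- by rewrite /dot; affine_tac.
- exists (fun v => match v with inl i => w0 i | inr i => y0 i end).
  by apply/fP_feas.
- by move=> x /fP_feas; apply: Ht.
move=> mu [Hmu [s [hts Hs]]].
pose eta i := mu (inl (inl (inl (inl (inl i))))).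
pose lamL i := mu (inl (inl (inl (inl (inr i))))).
pose lamU i := mu (inl (inl (inl (inr i)))).
pose tau i := mu (inl (inl (inr i))).
pose rho i := mu (inl (inr i)).
pose beta := mu (inr (inl (inl true))) - mu (inr (inl (inl false))).
pose tau0 := mu (inr (inl (inr true))) - mu (inr (inl (inr false))).
pose theta m := mu (inr (inr m)).
have L x : \sum_i (x (inl i) - cR i) * (gbar i - lamL i + lamU i + beta - eta i
                             + \sum_m theta m * h m * Dl m i)
    + \sum_i x (inr i) * (- (lamL i * vl i) - lamU i * vu i + tau i + tau0 - rho i)
    + Dval eta tau tau0 theta = s.
  rewrite -(Hs x) sum_fP.
  exact: (esym (lagP (fun i => x (inl i)) (fun i => x (inr i)) eta lamL lamU tau rho beta tau0 theta)).
have [HE HD] : (forall i, gbar i - lamL i + lamU i + beta - eta i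
                             + \sum_m theta m * h m * Dl m i = 0) /\
               Dval eta tau tau0 theta = s.
  apply: coef0 => u.
  have := L (fun v => match v with inl i => cR i + u i | inr _ => 0 end) => /=.
  rewrite [X in _ + X + _ = _ -> _]big1; last by move=> i _; rewrite mul0r.
  move=> <-; rewrite addr0; congr (_ + _); apply: eq_bigr => i _; congr (_ * _); ring.
have [HF _] : (forall i, - (lamL i * vl i) - lamU i * vu i + tau i + tau0 - rho i = 0) /\
               Dval eta tau tau0 theta = s.
  apply: coef0 => u.
  have := L (fun v => match v with inl i => cR i | inr i => u i end) => /=.
  rewrite big1 ?add0r //; last by move=> i _; rewrite subrr mul0r.
exists lamL, lamU, eta, tau, beta, tau0, theta; split; last by rewrite HD.
split => //.
- move=> i; have := HF i; have := Hmu (inl (inr i)); rewrite -/(rho i); lra.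
- by split => i; apply: Hmu.
- by split; [|split] => i; apply: Hmu.
Qed.


Definition fB (j : ('I_N.-1 + 'I_N.-1) + bool) (y : 'I_N.-1 -> R) : R :=
  match j with
  | inl (inl i) => y i - 1
  | inl (inr i) => - y i
  | inr true => \sum_i y i - Gamma
  | inr false => Gamma - \sum_i y i
  end.

Lemma fB_aff j : affine (fB j).
Proof. case: j => [[i|i]|[]] /=; affine_tac. Qed.

Lemma fB_feas y : (forall j, fB j y <= 0) <-> budget Gamma y.
Proof.
split.
  move=> H; split.
    move=> i; have := H (inl (inl i)); have := H (inl (inr i)) => /= h1 h2.
    by apply/andP; split; lra.
  by have := H (inr true); have := H (inr false) => /=; lra.
move=> [Hy Hs] [[i|i]|[]] /=; rewrite ?Hs ?subrr //; by have /andP[] := Hy i; lra.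
Qed.

Lemma I1_weak (a y tau : 'I_N.-1 -> R) tau0 : budget Gamma y -> (forall i, 0 <= tau i) ->
  (forall i, 0 <= a i + tau i + tau0) -> - \sum_i tau i - tau0 * Gamma <= \sum_i y i * a i.
Proof.
move=> [Hy Hs] Ht Ha.
have key : \sum_i (y i * a i + tau i + tau0 * y i) =
           \sum_i (y i * (a i + tau i + tau0) + tau i * (1 - y i)).
  by apply: eq_bigr => i _; ring.
have : 0 <= \sum_i (y i * (a i + tau i + tau0) + tau i * (1 - y i)).
  apply: sumr_ge0 => i _; have /andP[h1 h2] := Hy i; apply: addr_ge0.
    exact: mulr_ge0.
  by apply: mulr_ge0 => //; lra.
rewrite -key !big_split /= -mulr_sumr Hs; lra.
Qed.

Lemma I1_strong (a : 'I_N.-1 -> R) t :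
  (exists y0 : 'I_N.-1 -> R, budget Gamma y0) ->
  (forall y, budget Gamma y -> t < \sum_i y i * a i) ->
  exists tau tau0, (forall i, 0 <= tau i) /\ (forall i, 0 <= a i + tau i + tau0) /\
    t < - \sum_i tau i - tau0 * Gamma.
Proof.
move=> [y0 H0] Ht.
have := @lp_strong R _ _ fB (fun y => \sum_i y i * a i) t fB_aff.
case.
- affine_tac.
- by exists y0; apply/fB_feas.
- by move=> y /fB_feas; apply: Ht.
move=> mu [Hmu [s [hts Hs]]].
pose tau i := mu (inl (inl i)).
pose rho i := mu (inl (inr i)).
pose tau0 := mu (inr true) - mu (inr false).
have L y : \sum_i y i * (a i + tau i - rho i + tau0) + (- \sum_i tau i - tau0 * Gamma) = s.
  rewrite -(Hs y) !big_sumType !big_bool /=.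
  have key : \sum_i y i * (a i + tau i - rho i + tau0) =
     \sum_i (y i * a i + (tau i * (y i - 1) + tau i) + rho i * - y i + tau0 * y i).
    by apply: eq_bigr => i _; ring.
  rewrite key !big_split /= -mulr_sumr /tau0 /tau /rho.
  ring.
have [HF HD] := coef0 L.
exists tau, tau0; split; first by move=> i; apply: Hmu.
split; last by rewrite HD.
move=> i; have := HF i; have := Hmu (inl (inr i)); rewrite -/(rho i); lra.
Qed.

Lemma valD_pinfty : Gamma < 0 -> (forall i, 0 <= gbar i) ->
  val_D h Dl gbar cR vl vu Gamma = +oo%E.
Proof.
move=> hG hg.
have H r : (r%:E <= val_D h Dl gbar cR vl vu Gamma)%E.
  pose T := `|r| / (- Gamma).
  have hT : 0 <= T by apply: divr_ge0 => //; lra.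
  have := @le_valD (fun _ => 0) (fun _ => 0) gbar (fun _ => 0) 0 T (fun _ => 0).
  have -> : Dval gbar (fun _ => 0) T (fun _ => 0) = `|r|.
    rewrite /Dval big1 // big1 // => [|m _]; last by rewrite !mul0r.
    rewrite /T /dot (eq_bigr (fun i => gbar i * cR i)); last by move=> i _; rewrite mulrC.
    by field; lra.
  move=> h1.
  suff hD : Dpt (fun _ => 0) (fun _ => 0) gbar (fun _ => 0) 0 T (fun _ => 0).
    by apply: le_trans (h1 hD); rewrite lee_fin ler_norm.
  split.
  - by move=> i /=; rewrite big1 => [|m _]; rewrite ?mul0r; lra.
  - by move=> i; rewrite !mul0r; lra.
  - by split.
  - by split; [|split].
move: (H 0); case E: (val_D h Dl gbar cR vl vu Gamma) => [x| |] //.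
by move: (H (x + 1)%R); rewrite E lee_fin => h1 _; exfalso; lra.
Qed.

End Prob.

Section Final.
Variable R : realType.

Lemma le_approx (a b : \bar R) : (forall t : R, (t%:E < a)%E -> (t%:E <= b)%E) -> (a <= b)%E.
Proof.
case: a => [a| |] H; last by rewrite leNye.
- case: b H => [b| |] H.
  + rewrite lee_fin leNgt; apply/negP => hba.
    have := H ((a + b) / 2); rewrite !lte_fin !lee_fin => h.
    have [h1 h2] := midf_lt hba; rewrite (addrC b) in h1 h2; have := h h2; lra.
  + by rewrite leey.
  + by have := H (a - 1)%R; rewrite lte_fin => /(_ ltac:(lra)); rewrite leeNy_eq.
- case: b H => [b| |] H //.
  + by have := H (b + 1)%R; rewrite ltry lee_fin => /(_ isT) => h; exfalso; lra.
  + by have := H 0%R; rewrite ltry leeNy_eq => /(_ isT).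
Qed.

Lemma Rmap_01 (N M : nat) (h : 'I_M -> R) (Dl : 'I_M -> 'I_N.-1 -> R) v :
  Vset h Dl v -> forall i, 0 <= Rmap v i <= 1.
Proof.
move=> [Hv [Hs _]] i; rewrite /Rmap; case: insubP => [u _ _|_] /=.
  apply/andP; split => //; apply: le_trans Hs.
  by rewrite (bigD1 u) //= lerDl; apply: sumr_ge0.
have : 0 <= \sum_(k < N.-2) v k by apply: sumr_ge0.
by move=> h0; apply/andP; split; lra.
Qed.

Lemma sum_Rmap (N : nat) (v : 'I_N.-2 -> R) : (3 <= N)%N -> \sum_(i < N.-1) Rmap v i = 1.
Proof.
case: N v => [|[|[|N']]] // v _ /=.
rewrite big_ord_recr /=.
have e1 (i : 'I_N'.+1) : Rmap v (widen_ord (leqnSn _) i) = v i.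
  rewrite /Rmap; case: insubP => [u _ Hu|Hn] /=.
    by congr v; apply: val_inj; rewrite Hu.
  by move: Hn; rewrite /= ltn_ord.
have e2 : Rmap v ord_max = 1 - \sum_(k < N'.+1) v k.
  by rewrite /Rmap insubN //= ltnn.
under eq_bigr do rewrite e1.
rewrite e2; lra.
Qed.

Lemma gfun_ge0 (N : nat) (xs : nat -> R) x j : 0 <= @gfun R N xs x j.
Proof.
rewrite /gfun; case: (leP x (xs j)) => h1 //; case: (leP (xs j.+1) x) => h2 //.
apply: divr_ge0; lra.
Qed.

End Final.

Unset Implicit Arguments.
Local Open Scope classical_set_scope.

Theorem theorem2 (R : realType) (N n K M : nat) (xs : nat -> R)
  (z : 'I_n -> R) (xi : 'I_K -> 'I_n -> R)
  (r1 r2 r3 p h : 'I_M -> R) (c : 'I_N.-2 -> R) (Gamma : R) :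
  (3 <= N)%N ->
  (forall i j : nat, (i < j < N)%N -> xs i < xs j) ->
  (0 < K)%N ->
  (forall k, xs 0%N <= dot z (xi k) <= xs N.-1) ->
  (0 < M)%N ->
  (forall m, [/\ r1 m <= r3 m, xs 0%N <= r1 m <= xs N.-1,
                 xs 0%N <= r2 m <= xs N.-1 & xs 0%N <= r3 m <= xs N.-1]) ->
  (forall m, 0 <= p m <= 1) ->
  (forall m, h m = 1 \/ h m = -1) ->
  let Dl : 'I_M -> 'I_N.-1 -> R :=
    fun m => @Delta R N xs (p m) (r1 m) (r2 m) (r3 m) in
  let gbar : 'I_N.-1 -> R :=
    fun j => K%:R^-1 * \sum_(k < K) @gfun R N xs (dot z (xi k)) j in
  (exists v, interior_pt (Vset h Dl) v) ->
  analytic_center h Dl c ->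
  let cR := Rmap c in
  let vl := vlow h Dl cR in
  let vu := vup h Dl cR in
  Gamma <= (N.-1)%:R ->
  val_P h Dl gbar cR vl vu Gamma = val_D h Dl gbar cR vl vu Gamma /\
  val_L h Dl gbar cR vl vu Gamma = val_D h Dl gbar cR vl vu Gamma.
Proof.
move=> HN Hxs HK Hz HM Hr Hp Hh Dl gbar Hint [Hc Hcmax] cR vl vu HG.
have Vc : Vset h Dl c.
  by case: Hc => e he Hu; apply: Hu => i; rewrite subrr normr0.
have HcR : \sum_i cR i = 1 by apply: sum_Rmap.
have Hg i : 0 <= gbar i.
  by apply: mulr_ge0; [rewrite invr_ge0 | apply: sumr_ge0 => k _; apply: gfun_ge0].
have Hvl i : 0 <= vl i.
  rewrite /vl /vlow oppr_ge0.
  have hl : has_lbound [set Rmap v i - cR i | v in Vset h Dl].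
    exists (- cR i) => _ [v Hv <-].
    by have /andP[h1 _] := Rmap_01 Hv i; lra.
  by apply: (ge_inf hl); exists c => //; rewrite subrr.
have Hvu i : 0 <= vu i.
  rewrite /vu /vup.
  have hu : has_ubound [set Rmap v i - cR i | v in Vset h Dl].
    exists (1 - cR i) => _ [v Hv <-].
    by have /andP[_ h1] := Rmap_01 Hv i; lra.
  by apply: (ub_le_sup hu); exists c => //; rewrite subrr.
have Hk : (0 < N.-1)%N by move: HN; case: (N) => [|[|n0]].
have HkR : 0 < (N.-1)%:R :> R by rewrite ltr0n.
have Pfeas0 : 0 <= Gamma -> Pfeas h Dl cR vl vu Gamma cR (fun _ => Gamma / (N.-1)%:R).
  move=> hG0; have hy : 0 <= Gamma / (N.-1)%:R <= 1.
    apply/andP; split; first by apply: divr_ge0 => //; apply: ltW.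
    by rewrite ler_pdivrMr // mul1r.
  have [Hc0 [Hcs Hcm]] := Vc.
  split; [split; [|split] | | split].
  - by move=> i; have /andP[] := Rmap_01 Vc i.
  - exact: HcR.
  - exact: Hcm.
  - move=> i; have /andP[h1 h2] := hy; rewrite subrr; apply/andP; split.
      by rewrite oppr_le0; apply: mulr_ge0.
    by apply: mulr_ge0.
  - by move=> i.
  - rewrite sumr_const card_ord -(mulr_natr (Gamma / (N.-1)%:R)) mulfVK //.
    by rewrite gt_eqF.
have Bfeas0 : 0 <= Gamma -> exists y0 : 'I_N.-1 -> R, budget Gamma y0.
  by move=> hG0; have [_ _ Hb] := Pfeas0 hG0; exists (fun _ => Gamma / (N.-1)%:R).
split.
- apply/eqP; rewrite eq_le; apply/andP; split.
  + apply: le_approx => t Ht.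
    case: (ltP Gamma 0) => hG; first by rewrite valD_pinfty // leey.
    have Ht' w y : Pfeas h Dl cR vl vu Gamma w y -> t < dot w gbar.
      move=> Hwy; rewrite -lte_fin; apply: lt_le_trans Ht _.
      apply: ereal_inf_lbound; exists w, y; by case: Hwy.
    have [lamL [lamU [eta [tau [beta [tau0 [theta [HD Hlt]]]]]]]] :=
      P_strong HcR (ex_intro _ _ (ex_intro _ _ (Pfeas0 hG))) Ht'.
    apply: (le_trans _ (le_valD cR Gamma HD)); by rewrite lee_fin ltW.
  + apply: ge_ereal_sup => _ [lamL [lamU [eta [tau [beta [tau0 [theta [H1 H2 H3 H4 ->]]]]]]]].
    apply: le_ereal_inf_tmp => _ [w [y [Hv Hb Hbud ->]]].
    rewrite lee_fin.
    exact: (P_weak HcR (w:=w) (y:=y) (And3 Hv Hb Hbud) (And4 H1 H2 H3 H4)).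
- apply/eqP; rewrite eq_le; apply/andP; split.
  + apply: ge_ereal_sup => _ [lamL [lamU [beta [eta [theta [HE [HL HU] [Heta Hth] ->]]]]]].
    apply: le_approx => t Ht.
    case: (ltP Gamma 0) => hG; first by rewrite valD_pinfty // leey.
    pose a i := - (lamL i * vl i + lamU i * vu i).
    pose I2v := I2 h Dl gbar cR eta theta.
    have Ht2 : ((t - I2v)%:E < I1 lamL lamU vl vu Gamma)%E.
      move: Ht; rewrite -/I2v; case: (I1 lamL lamU vl vu Gamma) => [x| |] /=.
      - by rewrite -EFinD !lte_fin; lra.
      - by move=> _; exact: ltry.
      - by rewrite addeNy => hh; exfalso; move: hh; rewrite ltNge leNye.
    have Hy y : budget Gamma y -> t - I2v < \sum_i y i * a i.
      move=> Hb; rewrite -lte_fin; apply: lt_le_trans Ht2 _.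
      by apply: ereal_inf_lbound; exists y.
    have [tau [tau0 [Htau [Ha Hlt]]]] := I1_strong (Bfeas0 hG) Hy.
    have HD : Dpt h Dl gbar vl vu lamL lamU eta tau beta tau0 theta.
      split => //.
      by move=> i; have := Ha i; rewrite /a; lra.
    apply: (le_trans _ (le_valD cR Gamma HD)); rewrite lee_fin.
    move: Hlt; rewrite /I2v /I2 /Dval; lra.
  + apply: ge_ereal_sup => _ [lamL [lamU [eta [tau [beta [tau0 [theta [H1 H2 H3 H4 ->]]]]]]]].
    have [Heta [Hth Htau]] := H4.
    apply: (@le_trans _ _ ((I2 h Dl gbar cR eta theta)%:E + I1 lamL lamU vl vu Gamma)%E).
      have -> : (dot cR gbar - dot eta cR - \sum_(i < N.-1) tau i - tau0 * Gamma
                 + \sum_(m < M) theta m * h m * dot cR (Dl m))%:E =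
                ((I2 h Dl gbar cR eta theta)%:E + (- \sum_i tau i - tau0 * Gamma)%:E)%E.
        by rewrite -EFinD /I2; congr (_%:E); ring.
      apply: leeD2l; apply: le_ereal_inf_tmp => _ [y Hy <-]; rewrite lee_fin.
      apply: I1_weak => // i; have := H2 i; lra.
    apply: ereal_sup_ubound; exists lamL, lamU, beta, eta, theta; split => //.
Qed.
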